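(* Let $r>1$, $0<a<r$ coprime, let $Y$ be the Danilov resolution of $\frac1r(1,a,r-a)$, let $\sigma$ be a $3$-dimensional cone of $\Sigma(r,a)$, and let $s\neq t$ be points of the chart $U_\sigma\cong\mathbb C^3$. Then the representations $\mathcal F_s$ and $\mathcal F_t$ of the McKay quiver are not isomorphic.
   Context: Notation: for integers $s$ and $t>0$, $\langle s\rangle_t$ is the least non-negative integer congruent to $s$ modulo $t$. A pair of integers $(r,a)$ is admissible if $r\ge1$, $0\le a<r$, $\gcd(r,a)=1$ (so $a=0$ only for $r=1$). For admissible $(r,a)$ put $N(r,a)=\mathbb Z^3+\mathbb Z\cdot\frac1r(1,a,r-a)\subset\mathbb Q^3$; $e_1,e_2,e_3$ is the standard basis and $\Delta(r,a)$ the cone spanned by $e_1,e_2,e_3$. Let $b$ be an inverse of $a$ modulo $r$ and $p_i=\frac1r(\langle -ib\rangle_r,r-i,i)$, $i=0,\dots,r$ (so $p_0=e_2$, $p_r=e_3$, $p_{r-a}=\frac1r(1,a,r-a)$). For $r>1$ let $(r_L,a_L)=(r-a,\langle r\rangle_{r-a})$, $(r_R,a_R)=(a,\langle -r\rangle_a)$; there are lattice isomorphisms $L:N(r_L,a_L)\to N(r,a)$, $R:N(r_R,a_R)\to N(r,a)$ with $L(e_1)=e_1$, $L(e_2)=e_2$, $L(e_3)=p_{r-a}$, $R(e_1)=e_1$, $R(e_2)=p_{r-a}$, $R(e_3)=e_3$. The Danilov fan $\Sigma(r,a)$ is defined recursively: $\Sigma(1,0)$ is $\Delta(1,0)$ with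 its faces; for $r>1$, $\Sigma(r,a)$ consists of the cone spanned by $e_2,e_3,p_{r-a}$ with its faces, together with $L(\Sigma(r_L,a_L))$ and $R(\Sigma(r_R,a_R))$. The Danilov resolution $Y$ is the smooth toric variety of $\Sigma(r,a)$, with torus $T$; its rays are spanned by $e_1,p_0,\dots,p_r$; $D_i$ is the $T$-invariant prime divisor of the ray through $p_i$ and $E_j$ that of $e_j$. For a $3$-dimensional cone $\sigma$, $U_\sigma\cong\mathbb C^3$ is its affine chart. The permutation $\tau(r,a,\cdot)$ of $\{0,\dots,r-1\}$: if $a\in\{1,r-1\}$, $\tau(r,a,i)=\langle ai-1\rangle_r$; otherwise $\tau(r,a,i)=\tau(r-a,\langle r\rangle_{r-a},\langle i\rangle_{r-a})$ for $i\ge a$ and $\tau(r,a,i)=(r-a)+\tau(a,\langle -r\rangle_a,i)$ for $i<a$. With indices mod $r$, on $Y$ define $Y_{i-a}=\sum_{k=0}^{\tau(r,a,i)}D_k$, $Z_i=\sum_{k=\tau(r,a,i)+1}^{r}D_k$ ($i=0,\dots,r-1$), and $X_0,\dots,X_{r-1}$ the unique divisors with $X_0=E_1$ and $X_i+Z_{i+1}=Z_i+X_{i-a}$; these satisfy $X_i+Y_{i+1}=Y_i+X_{i+a}$, $X_i+Z_{i+1}=Z_i+X_{i-a}$, $Y_i+Z_{i+a}=Z_i+Y_{i-a}$. The McKay quiver has vertices $0,\dots,r-1$ (mod $r$) and arrows $x_i:i\to i+1$, $y_i:i\to i+a$, $z_i:i\to i-a$; a representation assigns a complex number $V(\alpha)$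 to each arrow with $V(y_{i+1})V(x_i)=V(x_{i+a})V(y_i)$, $V(z_{i+1})V(x_i)=V(x_{i-a})V(z_i)$, $V(y_{i-a})V(z_i)=V(z_{i+a})V(y_i)$; $V,V'$ are isomorphic if there exist $g_0,\dots,g_{r-1}\in\mathbb C^*$ with $V'(\alpha)=g_{\mathrm{hd}(\alpha)}V(\alpha)g_{\mathrm{tl}(\alpha)}^{-1}$ for all arrows. The family $\mathcal F$ on $Y$ consists of the line bundles $\mathcal O(X_i),\mathcal O(Y_i),\mathcal O(Z_i)$ with their canonical sections; concretely, for $s\in U_\sigma$, each effective $T$-invariant divisor $D$ restricts on $U_\sigma$ to the divisor of a unique monomial $f_{\sigma,D}$ in the toric coordinates of $U_\sigma$, and $\mathcal F_s$ is the representation with $x_i,y_i,z_i$ represented by $f_{\sigma,X_i}(s),f_{\sigma,Y_i}(s),f_{\sigma,Z_i}(s)$; its isomorphism class does not depend on the chosen chart containing $s$. *)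

(* Defs.v *)
From HB Require Import structures.
From mathcomp Require Import all_boot all_order all_algebra.
From mathcomp Require Import complex.
From mathcomp Require Import Rstruct.
Set Implicit Arguments. Unset Strict Implicit. Unset Printing Implicit Defensive.
Import Order.TTheory GRing.Theory Num.Theory.

Definition CC : fieldType := (Rdefinitions.R)[i].

Definition vec := (rat * rat * rat)%type.
Definition mkv (x y z : rat) : vec := (x, y, z).
Definition vx1 (v : vec) := v.1.1.
Definition vx2 (v : vec) := v.1.2.
Definition vx3 (v : vec) := v.2.
Definition vadd (v w : vec) : vec := mkv (vx1 v + vx1 w)%R (vx2 v + vx2 w)%R (vx3 v + vx3 w)%R.
Definition vscale (c : rat) (v : vec) : vec := mkv (c * vx1 v)%R (c * vx2 v)%R (c * vx3 v)%R.
Definition e1 : vec := mkv 1%R 0%R 0%R.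
Definition e2 : vec := mkv 0%R 1%R 0%R.
Definition e3 : vec := mkv 0%R 0%R 1%R.

(** <s>_t for s = -m, i.e. the least non-negative residue of -m mod t *)
Definition negmod (m t : nat) : nat := (t - m %% t) %% t.

Definition invmod (r a : nat) : nat := find (fun b => a * b %% r == 1 %% r) (iota 0 r).

Definition pvec (r a i : nat) : vec :=
  mkv ((negmod (i * invmod r a) r)%:R / r%:R)%R ((r - i)%:R / r%:R)%R (i%:R / r%:R)%R.

Definition Lmap (r a : nat) (v : vec) : vec :=
  vadd (vscale (vx1 v) e1) (vadd (vscale (vx2 v) e2) (vscale (vx3 v) (pvec r a (r - a)))).
Definition Rmap (r a : nat) (v : vec) : vec :=
  vadd (vscale (vx1 v) e1) (vadd (vscale (vx2 v) (pvec r a (r - a))) (vscale (vx3 v) e3)).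

Definition cone3 := (vec * vec * vec)%type.
Definition mapcone (f : vec -> vec) (c : cone3) : cone3 := (f c.1.1, f c.1.2, f c.2).

Definition rL (r a : nat) := r - a.
Definition aL (r a : nat) := r %% (r - a).
Definition rR (r a : nat) := a.
Definition aR (r a : nat) := negmod r a.

Fixpoint dfan_fuel (n r a : nat) : seq cone3 :=
  match n with
  | 0 => [:: (e1, e2, e3)]
  | n'.+1 =>
    if r <= 1 then [:: (e1, e2, e3)]
    else (e2, e3, pvec r a (r - a))
           :: map (mapcone (Lmap r a)) (dfan_fuel n' (rL r a) (aL r a))
           ++ map (mapcone (Rmap r a)) (dfan_fuel n' (rR r a) (aR r a))
  end.
Definition danilov_cones (r a : nat) : seq cone3 := dfan_fuel r r a.

(** * Divisors.  Ray labels: None is the ray of e1 (divisor E_1),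
    Some k is the ray of p_k (divisor D_k), 0 <= k <= r.
    (E_2 = D_0 and E_3 = D_r, as p_0 = e2 and p_r = e3.) *)
Definition label := option nat.
Definition labels (r : nat) : seq label := None :: map Some (iota 0 r.+1).
Definition rayvec (r a : nat) (l : label) : vec :=
  match l with None => e1 | Some k => pvec r a k end.

(** T-invariant divisors: integer coefficient on each ray label. *)
Definition divisor := label -> int.

Definition coefAt (r a : nat) (D : divisor) (v : vec) : int :=
  (\sum_(l <- labels r | rayvec r a l == v) D l)%R.

Fixpoint tau_fuel (n r a i : nat) : nat :=
  match n with
  | 0 => 0
  | n'.+1 =>
    if (a == 1%N) || (a == r.-1) then (a * i + r.-1) %% r   (* <a i - 1>_r *)
    else if a <= i then tau_fuel n' (r - a) (r %% (r - a)) (i %% (r - a))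
    else (r - a) + tau_fuel n' a (negmod r a) i
  end.
Definition tau (r a i : nat) : nat := tau_fuel r r a i.

Definition Zdiv (r a i : nat) : divisor := fun l =>
  match l with None => 0%R | Some k => Posz (nat_of_bool ((tau r a i < k) && (k <= r))) end.
(** Y_j = sum_{k=0}^{tau(<j+a>_r)} D_k   (i.e. Y_{i-a} = sum_{k<=tau(i)} D_k) *)
Definition Ydiv (r a j : nat) : divisor := fun l =>
  match l with None => 0%R | Some k => Posz (nat_of_bool (k <= tau r a ((j + a) %% r))) end.
(** X_i: the unique divisors with X_0 = E_1 and X_i + Z_{i+1} = Z_i + X_{i-a}.
    Solving the recursion along i -> i - a: for i = <-k a>_r (k = <-i b>_r),
    X_i = E_1 + sum_{j<k} (Z_{<1 - j a>_r} - Z_{<-j a>_r}). *)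
Definition Xdiv (r a i : nat) : divisor := fun l =>
  (Posz (nat_of_bool (l == None)) +
  \sum_(j < negmod (i * invmod r a) r)
     (Zdiv r a ((1 + negmod (j * a) r) %% r) l - Zdiv r a (negmod (j * a) r) l))%R.

Definition point := (CC * CC * CC)%type.

(** f_{sigma,D}(s): the monomial whose divisor on U_sigma is D, in the toric
    coordinates dual to the generators (v1, v2, v3) of sigma. *)
Definition monomial (r a : nat) (sigma : cone3) (D : divisor) (s : point) : CC :=
  (s.1.1 ^ coefAt r a D sigma.1.1 * s.1.2 ^ coefAt r a D sigma.1.2
  * s.2 ^ coefAt r a D sigma.2)%R.

(** Representations of the McKay quiver: values on x_i, y_i, z_i (i mod r). *)
Record qrep := QRep { rep_x : nat -> CC; rep_y : nat -> CC; rep_z : nat -> CC }.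

Definition qrep_iso (r a : nat) (V W : qrep) : Prop :=
  exists g : nat -> CC,
    (forall i, i < r -> g i != 0%R) /\
    (forall i, i < r ->
       [/\ rep_x W i = (g ((i + 1) %% r)%N * rep_x V i / g i)%R,
           rep_y W i = (g ((i + a) %% r)%N * rep_y V i / g i)%R &
           rep_z W i = (g ((i + r - a) %% r)%N * rep_z V i / g i)%R]).

Definition mckay_family (r a : nat) (sigma : cone3) (s : point) : qrep :=
  QRep (fun i => monomial r a sigma (Xdiv r a i) s)
       (fun i => monomial r a sigma (Ydiv r a i) s)
       (fun i => monomial r a sigma (Zdiv r a i) s).

(* Main.v *)
Require Import Defs.
From HB Require Import structures.
From mathcomp Require Import all_boot all_order all_algebra.
From mathcomp Require Import zify ring.
Set Implicit Arguments. Unset Strict Implicit. Unset Printing Implicit Defensive.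
Import Order.TTheory GRing.Theory Num.Theory.

Lemma modE (x y r : nat) : y < r -> x = y %[mod r] -> x %% r = y.
Proof. by move=> ? ->; rewrite modn_small. Qed.

Lemma negmod_lt r m : 0 < r -> negmod m r < r.
Proof. by move=> r0; rewrite /negmod ltn_pmod. Qed.

Lemma negmodE r m : 0 < r -> negmod m r + m = 0 %[mod r].
Proof.
move=> r0; rewrite /negmod modnDml -modnDmr subnK ?modnn ?mod0n //.
exact: ltnW (ltn_pmod m r0).
Qed.

Lemma negmod_uniq r m x : x < r -> x + m = 0 %[mod r] -> negmod m r = x.
Proof.
move=> xr h; have r0 : 0 < r by apply: leq_ltn_trans xr.
have h2 := negmodE m r0.
have : negmod m r + m = x + m %[mod r] by rewrite h2 h.
move/eqP; rewrite eqn_modDr => /eqP.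
by rewrite !modn_small ?negmod_lt.
Qed.

Lemma invmod_ex r a : 0 < r -> coprime r a ->
  exists2 b, b < r & a * b = 1 %[mod r].
Proof.
move=> r0 co.
case: (posnP a) => [a0|apos].
  move: co; rewrite a0 /coprime gcdn0 => /eqP r1.
  by exists 0; rewrite ?r1 // !modn1.
have : coprime a r by rewrite coprime_sym.
case/(coprimeP _ apos) => [[u v]] /= h.
exists (u %% r); first by rewrite ltn_pmod.
rewrite modnMmr mulnC.
have -> : u * a = 1 + v * r by nia.
by rewrite addnC modnMDl.
Qed.

Lemma invmodP r a : 0 < r -> coprime r a ->
  invmod r a < r /\ a * invmod r a = 1 %[mod r].
Proof.
move=> r0 co; case: (invmod_ex r0 co) => b br hb.
have hh : has (fun b => a * b %% r == 1 %% r) (iota 0 r).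
  by apply/hasP; exists b; rewrite ?mem_iota ?add0n // hb.
have hlt : find (fun b => a * b %% r == 1 %% r) (iota 0 r) < r.
  by move: (hh); rewrite has_find size_iota.
have := nth_find 0 hh; rewrite nth_iota // add0n => /eqP h.
by rewrite /invmod; split.
Qed.

Definition cK (r a k : nat) := negmod (k * a) r.

Lemma cK0 r a : cK r a 0 = 0.
Proof. by rewrite /cK /negmod mul0n mod0n subn0 modnn. Qed.

Lemma cK_lt r a k : 0 < r -> cK r a k < r.
Proof. exact: negmod_lt. Qed.

Lemma cK_step r a k : 0 < r -> a <= r -> cK r a k.+1 = (cK r a k + r - a) %% r.
Proof.
move=> r0 ar; apply: negmod_uniq; first by rewrite ltn_pmod.
rewrite modnDml.
have -> : cK r a k + r - a + k.+1 * a = (cK r a k + k * a) + r.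
  rewrite mulSn; nia.
by rewrite modnDr; exact: negmodE.
Qed.

Section NT.
Variables (r a : nat).
Hypotheses (r0 : 0 < r) (co : coprime r a) (ar : a < r).
Let b := invmod r a.
Let hb : a * b = 1 %[mod r]. Proof. by case: (invmodP r0 co). Qed.

Lemma mul_hb i : i * (a * b) = i %[mod r].
Proof. by rewrite -modnMmr hb modnMmr muln1. Qed.

Lemma cK_inv i : i < r -> cK r a (negmod (i * b) r) = i.
Proof.
move=> ir; apply: negmod_uniq => //.
have e : (negmod (i * b) r + i * b) * a = i + negmod (i * b) r * a %[mod r].
  by rewrite mulnDl -mulnA [b * a]mulnC -modnDmr mul_hb modnDmr addnC.
rewrite -e -modnMml negmodE //.
by rewrite mod0n mul0n mod0n.
Qed.

Lemma cK_K k : k < r -> negmod (cK r a k * b) r = k.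
Proof.
move=> kr; apply: negmod_uniq => //.
have e : (cK r a k + k * a) * b = k + cK r a k * b %[mod r].
  by rewrite mulnDl -mulnA -modnDmr mul_hb modnDmr addnC.
by rewrite -e -modnMml negmodE // mod0n mul0n mod0n.
Qed.

Lemma negmod_ab : 1 < r -> negmod (a * b) r = r.-1.
Proof.
move=> r1; apply: negmod_uniq; first by rewrite prednK.
by rewrite -modnDmr hb modnDmr addn1 prednK // modnn mod0n.
Qed.

Lemma cK_eq_a k : k < r.-1 -> cK r a k != a.
Proof.
move=> kr; apply/negP => /eqP e.
have kr' : k < r by apply: leq_trans kr (leq_pred r).
have := cK_K kr'; rewrite e.
case: (ltnP 1 r) => [r1|r1].
  by rewrite negmod_ab // => ek; move: kr; rewrite ek ltnn.
by move: kr; have -> : r = 1 by apply/eqP; rewrite eqn_leq r1 r0.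
Qed.

End NT.

Definition XS r a k (l : label) : int :=
  (Posz (l == None) + \sum_(j < k) (Zdiv r a ((1 + cK r a j) %% r)%N l - Zdiv r a (cK r a j) l))%R.

Lemma XdivE r a i l : Xdiv r a i l = XS r a (negmod (i * invmod r a) r) l.
Proof. by []. Qed.

Lemma XS_step r a k l : XS r a k.+1 l =
  (XS r a k l + (Zdiv r a ((1 + cK r a k) %% r)%N l - Zdiv r a (cK r a k) l))%R.
Proof. by rewrite /XS big_ord_recr /= GRing.addrA. Qed.

Lemma cK_last r a : 0 < r -> a < r -> cK r a r.-1 = a.
Proof.
move=> r0 ar; apply: negmod_uniq => //.
by rewrite -mulSn prednK // modnMr mod0n.
Qed.

Section Chain.
Variables (r a : nat).
Hypotheses (r0 : 0 < r) (co : coprime r a) (ar : a < r).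

Lemma X_cK k l : k < r -> Xdiv r a (cK r a k) l = XS r a k l.
Proof. by move=> kr; rewrite XdivE cK_K. Qed.

Lemma X_chain (F : nat -> int) l : F 0 = Xdiv r a 0 l ->
  (forall i, i < r -> i != a ->
     (F i + Zdiv r a ((i + 1) %% r)%N l = Zdiv r a i l + F ((i + r - a) %% r)%N)%R) ->
  forall i, i < r -> F i = Xdiv r a i l.
Proof.
move=> F0 Frel.
have H : forall k, k < r -> F (cK r a k) = Xdiv r a (cK r a k) l.
  elim=> [|k IH] kr; first by rewrite cK0.
  have kr' : k < r by apply: ltnW.
  have kr1 : k < r.-1 by rewrite -ltnS prednK.
  have := Frel _ (cK_lt a k r0) (cK_eq_a r0 co kr1).
  rewrite -(cK_step k r0 (ltnW ar)) => e.
  rewrite (X_cK l kr) XS_step -(X_cK l kr') -IH //.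
  by move: e; rewrite [(cK r a k + 1)%N]addnC; lia.
move=> i ir; rewrite -(cK_inv r0 co ir); apply: H; exact: negmod_lt.
Qed.

Lemma X_rel i l : i < r -> (i != a) || (r == 1) ->
  (Xdiv r a i l + Zdiv r a ((i + 1) %% r)%N l = Zdiv r a i l + Xdiv r a ((i + r - a) %% r)%N l)%R.
Proof.
move=> ir /orP [ia|/eqP r1].
  rewrite -(cK_inv r0 co ir).
  set K := negmod _ r.
  have Kr : K < r by exact: negmod_lt.
  have K1 : K.+1 < r.
    rewrite ltn_neqAle Kr andbT; apply/negP => /eqP eK.
    move: ia; rewrite -(cK_inv r0 co ir) -/K.
    have -> : K = r.-1 by rewrite -eK.
    by rewrite cK_last // eqxx.
  rewrite -(cK_step K r0 (ltnW ar)) (X_cK l Kr) (X_cK l K1) XS_step [(_ + 1)%N]addnC.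
  lia.
subst r; move: ir; rewrite ltnS leqn0 => /eqP ->.
move: ar; rewrite ltnS leqn0 => /eqP ->.
by rewrite !modn1 GRing.addrC.
Qed.
End Chain.

Definition valid r a := [&& 0 < r, a < r & coprime r a].

Lemma gcdn_sub m n : n <= m -> gcdn m (m - n) = gcdn m n.
Proof.
move=> nm; set k := m - n.
have mk : m = k + n by rewrite subnK.
rewrite mk gcdnC gcdnDl gcdnC.
by rewrite [in RHS]gcdnC gcdnDr.
Qed.

Lemma valid_pos r a : valid r a -> 1 < r -> 0 < a.
Proof.
case/and3P=> r0 ar co r1; case: (posnP a) => // a0.
by move: co r1; rewrite a0 /coprime gcdn0 => /eqP ->.
Qed.

Lemma validL r a : valid r a -> 1 < r -> valid (r - a) (r %% (r - a)).
Proof.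
move=> v r1; case/and3P: (v) => r0 ar co.
have rl0 : 0 < r - a by rewrite subn_gt0.
apply/and3P; split => //; first by rewrite ltn_pmod.
by rewrite coprime_modr /coprime gcdnC gcdn_sub ?(ltnW ar).
Qed.

Lemma validR r a : valid r a -> 1 < r -> valid a (negmod r a).
Proof.
move=> v r1; have a0 := valid_pos v r1; case/and3P: (v) => r0 ar co.
apply/and3P; split => //; first exact: negmod_lt.
rewrite /negmod coprime_modr /coprime gcdn_sub ?gcdn_modr; last exact: ltnW (ltn_pmod _ _).
by rewrite gcdnC.
Qed.

Lemma tau_fuel_S n r a i : tau_fuel n.+1 r a i =
  if (a == 1%N) || (a == r.-1) then (a * i + r.-1) %% r
  else if a <= i then tau_fuel n (r - a) (r %% (r - a)) (i %% (r - a))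
  else (r - a) + tau_fuel n a (negmod r a) i.
Proof. by []. Qed.

Lemma tau_fuelSS n r a i : valid r a -> r <= n -> tau_fuel n.+1 r a i = tau_fuel n r a i.
Proof.
elim: n r a i => [|n IH] r a i v rn.
  by case/and3P: v => r0; move: rn; rewrite leqn0 => /eqP ->.
rewrite tau_fuel_S [in RHS]tau_fuel_S.
case: ifP => // hb.
case/and3P: (v) => r0 ar co.
have r1 : 1 < r.
  rewrite ltn_neqAle r0 andbT; apply/negP => /eqP r1.
  by move: ar hb; rewrite -r1 ltnS leqn0 => /eqP ->.
have a0 := valid_pos v r1.
case: ifP => _.
  apply: IH; first exact: validL.
  lia.
apply: congr1; apply: IH; first exact: validR.
lia.
Qed.

Lemma tau_fuel_eq n r a i : valid r a -> r <= n -> tau_fuel n r a i = tau r a i.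
Proof.
move=> v; rewrite /tau; move=> /subnK <-; elim: (n - r) => // d IH.
by rewrite addSn tau_fuelSS // leq_addl.
Qed.

Lemma tau_base r a i : valid r a -> (a == 1%N) || (a == r.-1) -> tau r a i = (a * i + r.-1) %% r.
Proof.
case/and3P=> r0 _ _; rewrite /tau; case: r r0 => // r _ hb.
by rewrite tau_fuel_S hb.
Qed.

Lemma tau_rec r a i : valid r a -> ~~ ((a == 1%N) || (a == r.-1)) ->
  tau r a i = if a <= i then tau (r - a) (r %% (r - a)) (i %% (r - a))
              else (r - a) + tau a (negmod r a) i.
Proof.
move=> v hb; case/and3P: (v) => r0 ar co.
have r1 : 1 < r.
  rewrite ltn_neqAle r0 andbT; apply/negP => /eqP r1.
  by move: ar hb; rewrite -r1 ltnS leqn0 => /eqP ->.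
have a0 := valid_pos v r1.
rewrite {1}/tau; case: r r0 ar co v hb r1 a0 => // r _ ar co v hb r1 a0.
rewrite tau_fuel_S (negbTE hb).
case: ifP => _.
  apply: tau_fuel_eq; first exact: validL.
  lia.
by congr (_ + _); apply: tau_fuel_eq; [exact: validR | lia].
Qed.

Lemma tau_a1 r i : valid r 1 -> i < r -> tau r 1 i = if i == 0 then r.-1 else i.-1.
Proof.
move=> v ir; have r0 : 0 < r by case/and3P: v.
rewrite tau_base ?eqxx // mul1n.
case: eqP => [->|i0]; first by rewrite add0n modn_small // prednK.
apply: modE; first lia.
have -> : i + r.-1 = i.-1 + r by lia.
by rewrite modnDr.
Qed.

Lemma valid_rm1 r : 1 < r -> valid r r.-1.
Proof.
move=> r1; apply/and3P; split; [lia|lia|].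
by apply: coprimenP; lia.
Qed.

Lemma tau_arm1 r i : 1 < r -> i < r -> tau r r.-1 i = r.-1 - i.
Proof.
move=> r1 ir; rewrite tau_base ?valid_rm1 ?eqxx ?orbT //.
apply: modE; first lia.
have -> : r.-1 * i + r.-1 = i * r + (r.-1 - i) by nia.
by rewrite modnMDl.
Qed.

Lemma tau100 : tau 1 0 0 = 0.
Proof. by []. Qed.

Lemma tau1 i : tau 1 0 i = 0.
Proof. by rewrite /tau tau_fuel_S /= modn1. Qed.

Lemma tauL r a i : valid r a -> 1 < r -> a <= i -> i < r ->
  tau r a i = tau (r - a) (r %% (r - a)) (i %% (r - a)).
Proof.
move=> v r1 ai ir.
have a0 := valid_pos v r1.
case hb : ((a == 1%N) || (a == r.-1)); last by rewrite tau_rec ?hb // ai.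
case: (eqVneq a 1) => [a1|an1].
  subst a; rewrite tau_a1 //.
  case: (eqVneq i 0) => [i0|i0]; first lia.
  case: (eqVneq r 2) => [r2|r2].
    by subst r; rewrite modn1 tau1; lia.
  have rm : r %% (r - 1) = 1.
    apply: modE; first lia.
    set m := r - 1; have -> : r = 1 + m by rewrite /m; lia.
    by rewrite modnDr.
  have vL : valid (r - 1) 1 by move: (validL v r1); rewrite rm.
  have jr : i %% (r - 1) < r - 1 by rewrite ltn_pmod //; lia.
  rewrite rm (tau_a1 vL jr).
  case: (eqVneq i (r - 1)) => [ei|ei].
    by rewrite ei modnn eqxx; lia.
  rewrite modn_small; last lia.
  by rewrite (negbTE i0).
move: hb; rewrite (negbTE an1) /= => /eqP ar.
have -> : r - a = 1 by lia.
rewrite modn1 tau1.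
have ei : i = r.-1 by lia.
by rewrite ar ei tau_arm1 ?subnn //; lia.
Qed.

Lemma tauR r a i : valid r a -> 1 < r -> i < a ->
  tau r a i = (r - a) + tau a (negmod r a) i.
Proof.
move=> v r1 ia.
have a0 := valid_pos v r1.
case/and3P: (v) => r0 ar co.
case hb : ((a == 1%N) || (a == r.-1)); last by rewrite tau_rec ?hb // leqNgt ia.
case: (eqVneq a 1) => [a1|an1].
  subst a; have i0 : i = 0 by lia.
  subst i; rewrite tau_a1 //= /negmod modn1 tau1; lia.
move: hb; rewrite (negbTE an1) /= => /eqP ea.
have r3 : 2 < r by lia.
have nm : negmod r a = a.-1.
  apply: negmod_uniq; first lia.
  have -> : a.-1 + r = 2 * a by lia.
  by rewrite modnMl mod0n.
rewrite nm (tau_arm1 (_ : 1 < a)) //; last lia.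
have -> : tau r a i = r.-1 - i by rewrite ea tau_arm1 //; lia.
lia.
Qed.

Lemma tau_lt r a i : valid r a -> i < r -> tau r a i < r.
Proof.
elim: r {-2}r (leqnn r) a i => [|n IH] r rn a i v ir.
  by case/and3P: v; lia.
case/and3P: (v) => r0 ar co.
case: (ltnP 1 r) => r1.
  have a0 := valid_pos v r1.
  case: (leqP a i) => ai.
    rewrite tauL //.
    have vL := validL v r1.
    have : tau (r - a) (r %% (r - a)) (i %% (r - a)) < r - a.
      apply: IH => //; first lia.
      by rewrite ltn_pmod //; lia.
    lia.
  rewrite tauR //.
  have : tau a (negmod r a) i < a by apply: IH => //; [lia | exact: validR].
  lia.
have r1' : r = 1 by lia.
subst r; have a0 : a = 0 by lia.
by subst a; rewrite tau1.
Qed.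

Lemma labels_uniq r : uniq (labels r).
Proof.
rewrite /labels cons_uniq map_inj_uniq ?iota_uniq ?andbT; last by move=> x y [].
by apply/negP => /mapP [].
Qed.

Lemma in_labels r l : (l \in labels r) = if l is Some k then k <= r else true.
Proof.
case: l => [k|]; last by rewrite in_cons eqxx.
have inj : injective (@Some nat) by move=> x y [].
by rewrite /labels in_cons (mem_map inj) mem_iota add0n ltnS.
Qed.

Lemma nat_div_inj (r k k' : nat) : 0 < r -> (k%:R / r%:R = k'%:R / r%:R :> rat)%R -> k = k'.
Proof.
move=> r0 h; have rn : (r%:R != 0 :> rat)%R by rewrite pnatr_eq0 -lt0n.
have := congr1 (fun x => x * r%:R)%R h; rewrite !mulfVK // => /eqP.
by rewrite eqr_nat => /eqP.
Qed.

Lemma rayvec_inj r a l1 l2 : 0 < r -> rayvec r a l1 = rayvec r a l2 -> l1 = l2.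
Proof.
move=> r0; have rn : (r%:R != 0 :> rat)%R by rewrite pnatr_eq0 -lt0n.
have key : forall k, pvec r a k <> e1.
  move=> k; rewrite /pvec /e1 /mkv => -[] _ h2 h3.
  have k0 : k = 0 by apply: (@nat_div_inj r) => //; rewrite h3 mul0r.
  subst k; move: h2; rewrite subn0 divff //.
case: l1 => [k1|]; case: l2 => [k2|] //= h.
- congr Some; rewrite /pvec /mkv in h; case: h => _ _.
  exact: nat_div_inj.
- by case: (key _ h).
- by case: (key k2); rewrite h.
Qed.

Lemma coefAt_ray r a D l : 0 < r -> l \in labels r -> coefAt r a D (rayvec r a l) = D l.
Proof.
move=> r0 hl; rewrite /coefAt big_mkcond (bigD1_seq l) ?labels_uniq //= eqxx.
rewrite big1_seq ?addr0 // => i /andP [il _].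
case: eqP => // /(rayvec_inj r0) e.
by move: il; rewrite e eqxx.
Qed.

Lemma modM_l k x y n : x = y %[mod n] -> k * x = k * y %[mod n].
Proof. by move=> h; rewrite -modnMmr h modnMmr. Qed.
Lemma modD_l k x y n : x = y %[mod n] -> k + x = k + y %[mod n].
Proof. by move=> h; rewrite -modnDmr h modnDmr. Qed.
Lemma modD_cancel_r k x y n : x + k = y + k %[mod n] -> x = y %[mod n].
Proof. by move/eqP; rewrite eqn_modDr => /eqP. Qed.
Lemma eq_from_mod X Y M : X < M -> Y < M -> X = Y %[mod M] -> X = Y.
Proof. by move=> hx hy; rewrite !modn_small. Qed.

Lemma negmod_mul r a m : 0 < r -> coprime r a -> a < r ->
  a * negmod (m * invmod r a) r + m = 0 %[mod r].
Proof.
move=> r0 co ar.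
have h := negmodE (m * invmod r a) r0.
have := modM_l a h; rewrite muln0 mulnDr mulnA [a * m]mulnC -mulnA.
by rewrite -modnDmr (mul_hb r0 co) modnDmr.
Qed.

Lemma firstL r a m : valid r a -> 1 < r -> m <= r - a ->
  r * negmod (m * invmod (r - a) (r %% (r - a))) (r - a) + m
  = (r - a) * negmod (m * invmod r a) r.
Proof.
move=> v r1 mr.
have a0 := valid_pos v r1.
have vL := validL v r1.
case/and3P: (v) => r0 ar co.
case/and3P: (vL) => rL0 aL co'.
set rL := r - a in mr vL rL0 aL co' *.
set x := negmod (m * invmod r a) r.
set y := negmod (m * invmod rL (r %% rL)) rL.
have xr : x < r by exact: negmod_lt.
have yr : y < rL by exact: negmod_lt.
have corl : coprime r rL by rewrite /coprime gcdn_sub ?(ltnW ar).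
apply: (@eq_from_mod _ _ (r * rL)); [nia | nia |].
apply/eqP; rewrite (chinese_remainder corl); apply/andP; split; apply/eqP.
- have e1 : r * y + m = m %[mod r] by rewrite mulnC modnMDl.
  rewrite e1.
  apply: (@modD_cancel_r (a * x)).
  rewrite -mulnDl (_ : rL + a = r); last by rewrite /rL subnK // ltnW.
  by rewrite modnMr addnC (negmod_mul m r0 co ar) mod0n.
- have h := negmod_mul m rL0 co' aL; rewrite -/y in h.
  by rewrite modnMr -modnDml -modnMml modnDml h mod0n.
Qed.

Lemma firstR r a m : valid r a -> 1 < r -> m <= a ->
  r * negmod (m * invmod a (negmod r a)) a + a
  = a * negmod ((r - a + m) * invmod r a) r + m.
Proof.
move=> v r1 ma.
have a0 := valid_pos v r1.
have vR := validR v r1.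
case/and3P: (v) => r0 ar co.
case/and3P: (vR) => _ aRa coR.
set aR := negmod r a in aRa coR vR *.
set x := negmod ((r - a + m) * invmod r a) r.
set y := negmod (m * invmod a aR) a.
have xr : x < r by exact: negmod_lt.
have ya : y < a by exact: negmod_lt.
have hx : m = a -> x = 0.
  move=> ema; rewrite /x ema subnK ?(ltnW ar) //; apply: negmod_uniq => //.
  by rewrite add0n modnMr mod0n.
apply: (@eq_from_mod _ _ (r * a)).
  nia.
  case: (eqVneq m a) => [ema|nma]; first by rewrite hx // muln0 add0n ema; nia.
  nia.
apply/eqP; rewrite (chinese_remainder co); apply/andP; split; apply/eqP.
- rewrite mulnC modnMDl; apply: (@modD_cancel_r (r - a)).
  rewrite subnKC ?(ltnW ar) // modnn.
  have h := negmod_mul (r - a + m) r0 co ar; rewrite -/x in h.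
  by rewrite (_ : a * x + m + (r - a) = a * x + (r - a + m)) ?h ?mod0n //; nia.
- rewrite [a * x]mulnC modnMDl modnDr.
  apply: (@modD_cancel_r (aR * y)).
  have h := negmod_mul m a0 coR aRa; rewrite -/y in h.
  have h2 := modM_l y (negmodE r a0); rewrite -/aR muln0 mulnDr in h2.
  by rewrite [m + _]addnC h [r * y]mulnC [y * aR]mulnC in h2 *; rewrite addnC h2 mod0n.
Qed.

Lemma negmod_rab r a : valid r a -> 1 < r -> negmod ((r - a) * invmod r a) r = 1.
Proof.
move=> v r1; case/and3P: (v) => r0 ar co.
have [_ hb] := invmodP r0 co.
apply: negmod_uniq => //.
rewrite -modnDml -hb modnDml -mulnDl subnKC ?(ltnW ar) //.
by rewrite modnMr mod0n.
Qed.

Lemma pvec_ra r a : valid r a -> 1 < r ->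
  pvec r a (r - a) = mkv (1 / r%:R)%R (a%:R / r%:R)%R ((r - a)%:R / r%:R)%R.
Proof.
move=> v r1; case/and3P: (v) => r0 ar co.
by rewrite /pvec negmod_rab // subKn // ltnW.
Qed.

Lemma Lmap_e1 r a : Lmap r a e1 = e1.
Proof.
rewrite /Lmap /vadd /vscale /e1 /mkv /vx1 /vx2 /vx3 /=.
by congr (_, _, _); ring.
Qed.

Lemma Rmap_e1 r a : Rmap r a e1 = e1.
Proof.
rewrite /Rmap /vadd /vscale /e1 /mkv /vx1 /vx2 /vx3 /=.
by congr (_, _, _); ring.
Qed.

Lemma Lmap_pvec r a m : valid r a -> 1 < r -> m <= r - a ->
  Lmap r a (pvec (r - a) (r %% (r - a)) m) = pvec r a m.
Proof.
move=> v r1 mr.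
have a0 := valid_pos v r1.
case/and3P: (v) => r0 ar co.
have hf := firstL v r1 mr.
rewrite /Lmap pvec_ra // /vadd /vscale /e1 /e2 /mkv /vx1 /vx2 /vx3 /pvec /=.
set x := negmod (m * invmod r a) r in hf *.
set y := negmod _ (r - a) in hf *.
have rn : (r%:R != 0 :> rat)%R by rewrite pnatr_eq0 -lt0n.
have rln : ((r - a)%:R != 0 :> rat)%R by rewrite pnatr_eq0 -lt0n subn_gt0.
have ex : (x%:R = (r%:R * y%:R + m%:R) / (r - a)%:R :> rat)%R.
  by rewrite -natrM -natrD hf natrM; field.
have e1 : ((r - a - m)%:R = (r - a)%:R - m%:R :> rat)%R by rewrite natrB.
have e2 : ((r - m)%:R = r%:R - m%:R :> rat)%R by rewrite natrB //; lia.
have e3 : ((r - a)%:R = r%:R - a%:R :> rat)%R by rewrite natrB // ltnW.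
congr (_, _, _).
- by rewrite ex; field; rewrite ?rn ?rln.
- by rewrite e1 e2; rewrite e3 in rln *; field; rewrite ?rn ?rln.
- by field; rewrite ?rn ?rln.
Qed.

Lemma Rmap_pvec r a m : valid r a -> 1 < r -> m <= a ->
  Rmap r a (pvec a (negmod r a) m) = pvec r a (r - a + m).
Proof.
move=> v r1 ma.
have a0 := valid_pos v r1.
case/and3P: (v) => r0 ar co.
have hf := firstR v r1 ma.
rewrite /Rmap pvec_ra // /vadd /vscale /e3 /mkv /vx1 /vx2 /vx3 /pvec /=.
set x := negmod ((r - a + m) * invmod r a) r in hf *.
set y := negmod _ a in hf *.
have rn : (r%:R != 0 :> rat)%R by rewrite pnatr_eq0 -lt0n.
have an : (a%:R != 0 :> rat)%R by rewrite pnatr_eq0 -lt0n.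
have ex : (x%:R = (r%:R * y%:R + a%:R - m%:R) / a%:R :> rat)%R.
  have h : (r%:R * y%:R + a%:R = a%:R * x%:R + m%:R :> rat)%R.
    by rewrite -!natrM -!natrD hf.
  by rewrite h; field.
have e1 : ((a - m)%:R = a%:R - m%:R :> rat)%R by rewrite natrB.
have e2 : ((r - (r - a + m))%:R = a%:R - m%:R :> rat)%R.
  by rewrite (_ : r - (r - a + m) = a - m) ?natrB //; lia.
have e3 : ((r - a)%:R = r%:R - a%:R :> rat)%R by rewrite natrB // ltnW.
have e4 : ((r - a + m)%:R = r%:R - a%:R + m%:R :> rat)%R by rewrite natrD e3.
congr (_, _, _).
- by rewrite ex e1; field; rewrite ?rn ?an.
- by rewrite e1 e2; field; rewrite ?rn ?an.
- by rewrite e1 e3 e4; field; rewrite ?rn ?an.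
Qed.

Definition expo (D : divisor) (l1 l2 l3 : label) : int * int * int := (D l1, D l2, D l3).
Definition zexp : int * int * int := (0%R, 0%R, 0%R).

Definition hasU r a l1 l2 l3 e := exists2 i, i < r &
  [\/ expo (Xdiv r a i) l1 l2 l3 = e, expo (Ydiv r a i) l1 l2 l3 = e
    | expo (Zdiv r a i) l1 l2 l3 = e].

Definition GoodL r a l1 l2 l3 : Prop :=
  (forall (T : Type) (g : nat -> T),
     (forall i, i < r ->
        [/\ expo (Xdiv r a i) l1 l2 l3 = zexp -> g ((i + 1) %% r) = g i,
            expo (Ydiv r a i) l1 l2 l3 = zexp -> g ((i + a) %% r) = g i &
            expo (Zdiv r a i) l1 l2 l3 = zexp -> g ((i + r - a) %% r) = g i]) ->
     forall i, i < r -> g i = g 0)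
  /\ [/\ hasU r a l1 l2 l3 (1%R, 0%R, 0%R), hasU r a l1 l2 l3 (0%R, 1%R, 0%R)
       & hasU r a l1 l2 l3 (0%R, 0%R, 1%R)].

Definition shiftR (r a : nat) (l : label) : label :=
  if l is Some m then Some (r - a + m) else None.


Lemma sum_perm r (f : nat -> int) (h : nat -> nat) :
  (forall j, j < r -> h j < r) ->
  (forall j k, j < r -> k < r -> h j = h k -> j = k) ->
  (\sum_(j < r) f (h j) = \sum_(j < r) f j)%R.
Proof.
move=> hlt hinj.
pose H := fun j : 'I_r => Ordinal (hlt j (ltn_ord j)).
have injH : injective H.
  move=> j k /(congr1 val) /= e; apply/val_inj/(hinj _ _ (ltn_ord j) (ltn_ord k) e).
by rewrite [RHS](reindex_inj injH).
Qed.

Lemma X0E r a l : 0 < r -> Xdiv r a 0 l = Posz (l == None).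
Proof.
move=> r0; rewrite XdivE mul0n.
have -> : negmod 0 r = 0 by rewrite /negmod mod0n subn0 modnn.
by rewrite /XS big_ord0 GRing.addr0.
Qed.

Section Full.
Variables (r a : nat).
Hypotheses (v : valid r a).

Lemma XS_full l : XS r a r l = XS r a 0 l.
Proof.
case/and3P: (v) => r0 ar co.
rewrite /XS big_ord0 sumrB.
have e1 : (\sum_(j < r) Zdiv r a ((1 + cK r a j) %% r)%N l = \sum_(j < r) Zdiv r a j l)%R.
  apply: (@sum_perm r (fun m => Zdiv r a m l) (fun j => (1 + cK r a j) %% r)).
    by move=> j _; rewrite ltn_pmod.
  move=> j k jr kr /eqP; rewrite eqn_modDl => /eqP.
  rewrite !modn_small ?cK_lt // => e.
  by rewrite -(cK_K r0 co jr) -(cK_K r0 co kr) e.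
have e2 : (\sum_(j < r) Zdiv r a (cK r a j) l = \sum_(j < r) Zdiv r a j l)%R.
  apply: (@sum_perm r (fun m => Zdiv r a m l) (fun j => cK r a j)).
    by move=> j _; rewrite cK_lt.
  by move=> j k jr kr e; rewrite -(cK_K r0 co jr) -(cK_K r0 co kr) e.
by rewrite e1 e2 GRing.subrr GRing.addr0.
Qed.

Lemma X_rel_full i l : i < r ->
  (Xdiv r a i l + Zdiv r a ((i + 1) %% r)%N l = Zdiv r a i l + Xdiv r a ((i + r - a) %% r)%N l)%R.
Proof.
case/and3P: (v) => r0 ar co ir.
case: (eqVneq r 1) => [r1|r1].
  by apply: X_rel => //; rewrite r1 orbT.
case: (eqVneq i a) => [ia|ia]; last by apply: X_rel => //; rewrite ia.
subst i.
have r1' : 1 < r by lia.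
have hr : r.-1 < r by lia.
have hX := X_cK r0 co l hr; rewrite cK_last // in hX.
have -> : (a + r - a) %% r = 0 by rewrite addnC addnK modnn.
rewrite X0E // hX.
have hs := XS_step r a r.-1 l; rewrite prednK // cK_last // in hs.
have := XS_full l; rewrite hs.
rewrite [XS r a 0 l]/XS big_ord0 [(a + 1)%N]addnC.
lia.
Qed.
End Full.

Lemma modsub n x y : 0 < n -> y <= x -> (x %% n + n - y %% n) %% n = (x - y) %% n.
Proof.
move=> n0 yx; apply/eqP; rewrite -(eqn_modDr (y %% n)).
have wn : y %% n <= n by apply: ltnW; rewrite ltn_pmod.
rewrite subnK; last by apply: leq_trans wn (leq_addl _ _).
rewrite modnDr modnDmr subnK //.
by rewrite modn_mod.
Qed.

Definition Yt r a m (l : label) : int := if l is Some k then Posz (k <= tau r a m) else 0.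

Lemma YdivE r a j l : Ydiv r a j l = Yt r a ((j + a) %% r) l.
Proof. by case: l. Qed.

Section Restr.
Variables (r a : nat).
Hypotheses (v : valid r a) (r1 : 1 < r).

Lemma tau_ltL i : a <= i -> i < r -> tau r a i < r - a.
Proof.
move=> ai ir; rewrite tauL //; apply: tau_lt; first exact: validL.
by rewrite ltn_pmod //; case/and3P: v; lia.
Qed.

Lemma tau_geR i : i < a -> r - a <= tau r a i.
Proof. by move=> ia; rewrite tauR // leq_addr. Qed.

Lemma ZL1 i l : l \in labels (r - a) -> a <= i -> i < r ->
  Zdiv r a i l = Zdiv (r - a) (r %% (r - a)) (i %% (r - a)) l.
Proof.
case: l => [k|] //; rewrite in_labels => kl ai ir /=.
rewrite (tauL v r1 ai ir) kl (_ : k <= r) //; lia.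
Qed.

Lemma ZL0 i l : l \in labels (r - a) -> i < a -> Zdiv r a i l = 0%R.
Proof.
case: l => [k|] //; rewrite in_labels => kl ia /=.
have := tau_geR ia; case: (ltnP (tau r a i) k) => //; lia.
Qed.

Lemma YL1 m l : l \in labels (r - a) -> a <= m -> m < r ->
  Yt r a m l = Yt (r - a) (r %% (r - a)) (m %% (r - a)) l.
Proof. by case: l => [k|] //= _ am mr; rewrite (tauL v r1 am mr). Qed.

Lemma ZR1 i l : l \in labels a -> i < a ->
  Zdiv r a i (shiftR r a l) = Zdiv a (negmod r a) i l.
Proof.
case: l => [k|] //; rewrite in_labels => ka ia /=.
rewrite (tauR v r1 ia) ltn_add2l.
case/and3P: v => _ ar _.
by rewrite (_ : r - a + k <= r = (k <= a)) //; lia.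
Qed.

Lemma ZRF i l : l \in labels a -> a <= i -> i < r ->
  Zdiv r a i (shiftR r a l) = Posz (l != None).
Proof.
case: l => [k|] //; rewrite in_labels => ka ai ir /=.
have := tau_ltL ai ir.
case/and3P: v => _ ar _.
rewrite (_ : r - a + k <= r) ?andbT; last lia.
by move=> h; rewrite (_ : tau r a i < r - a + k) //; lia.
Qed.

Lemma YR0 m l : l \in labels a -> a <= m -> m < r -> Yt r a m (shiftR r a l) = 0%R.
Proof.
case: l => [k|] //; rewrite in_labels => ka am mr /=.
have := tau_ltL am mr.
by move=> h; rewrite (_ : r - a + k <= tau r a m = false) //; lia.
Qed.

Lemma YR1 m l : l \in labels a -> m < a ->
  Yt r a m (shiftR r a l) = Yt a (negmod r a) m l.
Proof.
case: l => [k|] //; rewrite in_labels => ka ma /=.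
by rewrite (tauR v r1 ma) leq_add2l.
Qed.
End Restr.

Section XLsec.
Variables (r a : nat).
Hypotheses (v : valid r a) (r1 : 1 < r).

Lemma XL c l : l \in labels (r - a) -> c < r - a ->
  Xdiv r a c l = Xdiv (r - a) (r %% (r - a)) c l.
Proof.
move=> hl cr.
have a0 := valid_pos v r1.
have vL := validL v r1.
case/and3P: (v) => r0 ar co.
have [rL erL] : {rL | rL = r - a} by exists (r - a).
have [aL eaL] : {aL | aL = r %% rL} by exists (r %% rL).
have hl0 := hl.
rewrite -erL in vL hl cr *.
rewrite -eaL in vL *.
have rL0 : 0 < rL by lia.
pose F i := if i == r.-1 then (Xdiv rL aL ((a - 1) %% rL) l + Zdiv rL aL (a %% rL) l)%R
            else Xdiv rL aL (i %% rL) l.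
suff H : forall i, i < r -> F i = Xdiv r a i l.
  rewrite -H; last lia.
  by rewrite /F (_ : (c == r.-1) = false) ?modn_small //; lia.
apply: X_chain => //.
  rewrite /F (_ : (0 == r.-1) = false); last lia.
  by rewrite mod0n !X0E.
move=> i ir ia.
have relL := fun c => X_rel_full vL l (ltn_pmod c rL0).
have M1 : forall x, (x %% rL + 1) %% rL = (x + 1) %% rL by move=> x; rewrite modnDml.
have aLE : aL = a %% rL by rewrite eaL (_ : r = a + rL) ?modnDr //; lia.
have M2 : forall x, a <= x -> (x %% rL + rL - aL) %% rL = (x - a) %% rL.
  by move=> x ax; rewrite aLE modsub.
case: (eqVneq i r.-1) => [ei|ei].
  subst i.
  have -> : (r.-1 + 1) %% r = 0 by rewrite addn1 prednK // modnn.
  have -> : (r.-1 + r - a) %% r = r.-1 - a.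
    apply: modE; first lia.
    by rewrite (_ : r.-1 + r - a = r.-1 - a + r) ?modnDr //; lia.
  rewrite /F eqxx (_ : (r.-1 - a == r.-1) = false); last by lia.
  rewrite (ZL0 v r1 hl0 a0) (ZL1 v r1 hl0 (_ : a <= r.-1)) -?erL -?eaL //; try lia.
  have e1 : r.-1 %% rL = (a - 1) %% rL.
    by rewrite (_ : r.-1 = (a - 1) + rL) ?modnDr //; lia.
  have hr := relL r.-1.
  rewrite M1 M2 in hr; last lia.
  rewrite (_ : r.-1 + 1 = a + rL) in hr; last lia.
  rewrite modnDr e1 in hr; rewrite e1.
  lia.
rewrite /F (negbTE ei).
case: (leqP a i) => ai.
  have -> : (i + 1) %% r = i + 1 by apply: modn_small; lia.
  have -> : (i + r - a) %% r = i - a.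
    apply: modE; first lia.
    by rewrite (_ : i + r - a = i - a + r) ?modnDr //; lia.
  rewrite (_ : (i - a == r.-1) = false); last by lia.
  rewrite (ZL1 v r1 hl0 ai ir) (ZL1 v r1 hl0 (_ : a <= i + 1) (_ : i + 1 < r)) -?erL -?eaL; try lia.
  have := relL i; rewrite M1 M2 //.
have -> : (i + r - a) %% r = i + rL.
  by rewrite (_ : i + r - a = i + rL) ?modn_small //; lia.
rewrite (ZL0 v r1 hl0 ai).
case: (eqVneq i (a - 1)) => [eia|eia].
  subst i.
  rewrite (_ : a - 1 + rL == r.-1); last by apply/eqP; lia.
  rewrite (_ : (a - 1 + 1) %% r = a); last by rewrite subnK ?modn_small //; lia.
  rewrite (ZL1 v r1 hl0 (leqnn a) ar) -?erL -?eaL; lia.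
rewrite (_ : (i + rL == r.-1) = false); last lia.
rewrite (_ : (i + 1) %% r = i + 1); last by apply: modn_small; lia.
rewrite (ZL0 v r1 hl0 (_ : i + 1 < a)); last lia.
by rewrite modnDr GRing.add0r GRing.addr0.
Qed.
End XLsec.

Section XRsec.
Variables (r a : nat).
Hypotheses (v : valid r a) (r1 : 1 < r).

Lemma XR c l : l \in labels a -> c < a ->
  Xdiv r a c (shiftR r a l) = Xdiv a (negmod r a) c l.
Proof.
move=> hl ca.
have a0 := valid_pos v r1.
have vR := validR v r1.
case/and3P: (v) => r0 ar co.
have [aR eaR] : {aR | aR = negmod r a} by exists (negmod r a).
rewrite -eaR in vR *.
have hR : aR + r = 0 %[mod a] by rewrite eaR; exact: negmodE.
have aRa : aR < a by case/and3P: vR.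
pose Full : int := Posz (l != None).
pose F i := if i == r.-1 then (Xdiv a aR (a - 1) l + Full - Zdiv a aR (a - 1) l)%R
            else Xdiv a aR (i %% a) l.
suff H : forall i, i < r -> F i = Xdiv r a i (shiftR r a l).
  rewrite -H; last lia.
  by rewrite /F (_ : (c == r.-1) = false) ?modn_small //; lia.
apply: X_chain => //.
  rewrite /F (_ : (0 == r.-1) = false); last lia.
  by rewrite mod0n !X0E //; case: (l).
move=> i ir _.
have relR := fun c => X_rel_full vR l (ltn_pmod c a0).
have ZR : forall m, m < a -> Zdiv r a m (shiftR r a l) = Zdiv a aR m l.
  by move=> m h; rewrite eaR; exact: ZR1.
have ZF := fun m (h1 : a <= m) (h2 : m < r) => ZRF v r1 hl h1 h2.
case: (eqVneq i r.-1) => [ei|ei].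
  subst i.
  have -> : (r.-1 + 1) %% r = 0 by rewrite addn1 prednK // modnn.
  have -> : (r.-1 + r - a) %% r = r.-1 - a.
    apply: modE; first lia.
    by rewrite (_ : r.-1 + r - a = r.-1 - a + r) ?modnDr //; lia.
  rewrite /F eqxx (_ : (r.-1 - a == r.-1) = false); last by lia.
  rewrite (ZR 0 a0) (ZF r.-1); try lia.
  have hr := relR (a - 1).
  rewrite (modn_small (_ : a - 1 < a)) in hr; last lia.
  rewrite subnK // modnn in hr.
  have e : (a - 1 + a - aR) %% a = (r.-1 - a) %% a.
    apply: (@modD_cancel_r (aR + 1 + a)).
    rewrite (_ : a - 1 + a - aR + (aR + 1 + a) = 3 * a); last lia.
    rewrite (_ : r.-1 - a + (aR + 1 + a) = aR + r); last lia.
    by rewrite hR modnMl mod0n.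
  rewrite e in hr.
  rewrite /Full; lia.
rewrite /F (negbTE ei).
case: (leqP a i) => ai.
  have -> : (i + 1) %% r = i + 1 by apply: modn_small; lia.
  have -> : (i + r - a) %% r = i - a.
    apply: modE; first lia.
    by rewrite (_ : i + r - a = i - a + r) ?modnDr //; lia.
  rewrite (_ : (i - a == r.-1) = false); last by lia.
  rewrite (ZF i) ?(ZF (i + 1)); try lia.
  rewrite (_ : i %% a = (i - a) %% a); last by rewrite -{1}(subnK ai) modnDr.
  lia.
have -> : (i + r - a) %% r = i + (r - a).
  by rewrite (_ : i + r - a = i + (r - a)) ?modn_small //; lia.
rewrite (ZR i ai).
case: (eqVneq i (a - 1)) => [eia|eia].
  subst i.
  rewrite (_ : a - 1 + (r - a) == r.-1); last by apply/eqP; lia.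
  rewrite (_ : (a - 1 + 1) %% r = a); last by rewrite subnK ?modn_small //; lia.
  rewrite (ZF a) ?(modn_small (_ : a - 1 < a)); try lia.
rewrite (_ : (i + (r - a) == r.-1) = false); last lia.
rewrite (_ : (i + 1) %% r = i + 1); last by apply: modn_small; lia.
rewrite (ZR (i + 1)); last lia.
have hr := relR i.
rewrite (modn_small ai) (modn_small (_ : i + 1 < a)) in hr; last lia.
have e : (i + a - aR) %% a = (i + (r - a)) %% a.
  apply: (@modD_cancel_r (aR + a)).
  rewrite (_ : i + a - aR + (aR + a) = 2 * a + i); last lia.
  rewrite (_ : i + (r - a) + (aR + a) = i + (aR + r)); last lia.
  by rewrite modnMDl -modnDmr hR mod0n addn0.
rewrite e in hr.
rewrite (modn_small ai); lia.
Qed.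
End XRsec.

Lemma GoodBase' : GoodL 1 0 None (Some 0) (Some 1).
Proof.
split.
  by move=> T g _ i; rewrite ltnS leqn0 => /eqP ->.
split; exists 0 => //.
- by apply: Or31; rewrite /expo !X0E.
- by apply: Or32.
- by apply: Or33.
Qed.

Section Top.
Variables (r a : nat).
Hypotheses (v : valid r a) (r1 : 1 < r).

Lemma XT0 i : i < r -> Xdiv r a i (Some 0) = 0%R.
Proof.
case/and3P: (v) => r0 ar co ir.
symmetry; apply: (@X_chain r a r0 co ar (fun _ => 0%R)) => //.
  by rewrite X0E.
Qed.

Lemma XTr i : i < r -> Xdiv r a i (Some r) = 0%R.
Proof.
case/and3P: (v) => r0 ar co ir.
symmetry; apply: (@X_chain r a r0 co ar (fun _ => 0%R)) => //.
  by rewrite X0E.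
move=> j jr _; rewrite /Zdiv !tau_lt ?leqnn //.
by rewrite ltn_pmod.
Qed.

Lemma ZTm m : m < r -> Zdiv r a m (Some (r - a)) = Posz (a <= m).
Proof.
move=> mr; rewrite /Zdiv leq_subr andbT.
case: (leqP a m) => am; first by rewrite tau_ltL.
by rewrite ltnNge tau_geR.
Qed.

Lemma XTm i : i < r -> Xdiv r a i (Some (r - a)) = Posz (i == r.-1).
Proof.
have a0 := valid_pos v r1.
case/and3P: (v) => r0 ar co ir.
symmetry; apply: (@X_chain r a r0 co ar (fun i => Posz (i == r.-1))) => //.
  by rewrite X0E //; case: eqP => //; lia.
move=> j jr _.
rewrite !ZTm ?ltn_pmod // /=.
case: (eqVneq j r.-1) => [ej|ej].
  subst j.
  rewrite (_ : (r.-1 + 1) %% r = 0); last by rewrite addn1 prednK // modnn.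
  rewrite (_ : (r.-1 + r - a) %% r = r.-1 - a); last first.
    apply: modE; first lia.
    by rewrite (_ : r.-1 + r - a = r.-1 - a + r) ?modnDr //; lia.
  rewrite (_ : (r.-1 - a == r.-1) = false); last lia.
  rewrite (_ : a <= 0 = false); last lia.
  rewrite (_ : a <= r.-1); last lia.
  by [].
rewrite (modn_small (_ : j + 1 < r)); last lia.
case: (leqP a j) => aj.
  rewrite (_ : (j + r - a) %% r = j - a); last first.
    apply: modE; first lia.
    by rewrite (_ : j + r - a = j - a + r) ?modnDr //; lia.
  rewrite (_ : (j - a == r.-1) = false); last lia.
  by rewrite (_ : a <= j + 1); last lia.
rewrite (_ : (j + r - a) %% r = j + r - a); last by apply: modn_small; lia.
case: (eqVneq (j + 1) a) => [e|e].
  rewrite (_ : j + r - a == r.-1); last lia.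
  by rewrite (_ : a <= j + 1); last lia.
rewrite (_ : (j + r - a == r.-1) = false); last lia.
by rewrite (_ : (a <= j + 1) = false); last lia.
Qed.

Lemma GoodTop' : GoodL r a (Some 0) (Some r) (Some (r - a)).
Proof.
have a0 := valid_pos v r1.
case/and3P: (v) => r0 ar co.
split.
  move=> T g H.
  have step : forall i, i < r.-1 -> g (i + 1) = g i.
    move=> i ir; have ir' : i < r by lia.
    have [hx _ _] := H i ir'.
    rewrite -hx; first by rewrite modn_small //; lia.
    rewrite /expo /zexp XT0 ?XTr ?XTm //; try lia.
    by rewrite (_ : (i == r.-1) = false) //; lia.
  elim=> // i IH ir.
  by rewrite -addn1 step ?IH //; lia.
split.
- exists 0; first lia.
  apply: Or32.
  rewrite /expo !YdivE add0n (modn_small ar).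
  have h := tau_ltL v r1 (leqnn a) ar.
  have y1 : Yt r a a (Some 0) = 1%R by [].
  have y2 : Yt r a a (Some r) = 0%R by rewrite /Yt leqNgt tau_lt.
  have y3 : Yt r a a (Some (r - a)) = 0%R by rewrite /Yt leqNgt h.
  by rewrite y1 y2 y3.
- exists 0; first lia.
  apply: Or33.
  have z1 : Zdiv r a 0 (Some 0) = 0%R by rewrite /Zdiv ltn0.
  have z2 : Zdiv r a 0 (Some r) = 1%R by rewrite /Zdiv tau_lt // leqnn.
  have z3 : Zdiv r a 0 (Some (r - a)) = 0%R by rewrite ZTm // leqNgt a0.
  by rewrite /expo z1 z2 z3.
- exists r.-1; first lia.
  have hr : r.-1 < r by lia.
  by apply: Or31; rewrite /expo (XT0 hr) (XTr hr) (XTm hr) eqxx.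
Qed.
End Top.

Section TransL.
Variables (r a : nat).
Hypotheses (v : valid r a) (r1 : 1 < r).

Lemma GoodTransL' l1 l2 l3 :
  l1 \in labels (r - a) -> l2 \in labels (r - a) -> l3 \in labels (r - a) ->
  GoodL (r - a) (r %% (r - a)) l1 l2 l3 -> GoodL r a l1 l2 l3.
Proof.
move=> h1 h2 h3 [Gc [U1 U2 U3]].
have a0 := valid_pos v r1.
case/and3P: (v) => r0 ar co.
have expX : forall c, c < r - a ->
    expo (Xdiv r a c) l1 l2 l3 = expo (Xdiv (r - a) (r %% (r - a)) c) l1 l2 l3.
  by move=> c cr; rewrite /expo !(XL v r1) .
have expZ1 : forall i, a <= i -> i < r ->
    expo (Zdiv r a i) l1 l2 l3 = expo (Zdiv (r - a) (r %% (r - a)) (i %% (r - a))) l1 l2 l3.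
  by move=> i ai ir; rewrite /expo !(ZL1 v r1).
have expZ0 : forall i, i < a -> expo (Zdiv r a i) l1 l2 l3 = zexp.
  by move=> i ia; rewrite /expo !(ZL0 v r1).
have rL0 : 0 < r - a by lia.
have aLa : a %% (r - a) = r %% (r - a).
  by rewrite {2}(_ : r = a + (r - a)) ?modnDr //; lia.
have aLlt : r %% (r - a) < r - a by rewrite ltn_pmod.
have lift : forall c, c < r - a -> exists2 m, a <= m < r & m %% (r - a) = c.
  move=> c cr; exists (a + (c + (r - a) - r %% (r - a)) %% (r - a)).
    by rewrite leq_addr /=; have := ltn_pmod (c + (r - a) - r %% (r - a)) rL0; lia.
  rewrite modnDmr -modnDml aLa.
  rewrite (_ : r %% (r - a) + (c + (r - a) - r %% (r - a)) = c + (r - a)); last lia.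
  by rewrite modnDr modn_small.
have expY : forall c m, c < r - a -> a <= m -> m < r ->
    m %% (r - a) = (c + r %% (r - a)) %% (r - a) ->
    expo (Ydiv r a (m - a)) l1 l2 l3 = expo (Ydiv (r - a) (r %% (r - a)) c) l1 l2 l3.
  move=> c m cr am mr em.
  rewrite /expo !YdivE subnK // (modn_small mr).
  by rewrite !(YL1 v r1) // em.
have subE : forall c m, c < r - a -> a <= m -> m < r ->
    m %% (r - a) = (c + r %% (r - a)) %% (r - a) -> (m - a) %% (r - a) = c.
  move=> c m cr am mr em.
  rewrite -modsub // em aLa.
  apply: modE => //; apply: (@modD_cancel_r (r %% (r - a))).
  rewrite subnK; last lia.
  by rewrite modnDr modn_mod.
split.
  move=> T g H.
  have step1 : forall i, i < r -> g i = g (i %% (r - a)).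
    elim/ltn_ind => i IH ir.
    case: (ltnP i (r - a)) => ia; first by rewrite modn_small.
    have i'a : i - (r - a) < a by lia.
    have hlt_ : i - (r - a) < r by lia.
    have [_ _ hz] := H _ hlt_.
    have := hz (expZ0 _ i'a).
    rewrite (_ : (i - (r - a) + r - a) %% r = i); last by rewrite modn_small; lia.
    move=> ->; rewrite IH; try lia.
    by rewrite -{2}(subnK ia) modnDr.
  have small : forall c, c < r - a -> g c = g 0.
    apply: Gc => c cr; split => hz.
    - have hlt_ : c < r by lia.
      have [hx _ _] := H c hlt_.
      have := hx (etrans (expX c cr) hz).
      rewrite modn_small; last lia.
      move=> <-; rewrite -step1 //; lia.
    - have m'lt : (c + r %% (r - a)) %% (r - a) < r - a by rewrite ltn_pmod.
      have [m /andP [am mr] em] := lift _ m'lt.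
      have hlt_ : m - a < r by lia.
      have [_ hy _] := H (m - a) hlt_.
      have := hy (etrans (expY c m cr am mr em) hz).
      rewrite subnK // (modn_small mr) (step1 (m - a)); last lia.
      rewrite (subE c m cr am mr em).
      by move=> <-; rewrite -em -step1.
    - have [i /andP [ai ir] ei] := lift c cr.
      have [_ _ hzz] := H i ir.
      have hz' : expo (Zdiv (r - a) (r %% (r - a)) (i %% (r - a))) l1 l2 l3 = zexp by rewrite ei.
      have := hzz (etrans (expZ1 i ai ir) hz').
      rewrite (_ : (i + r - a) %% r = i - a); last by rewrite (_ : i + r - a = i - a + r) ?modnDr ?modn_small //; lia.
      rewrite (step1 (i - a)); last lia.
      rewrite (step1 i) // ei => <-.
      by rewrite -(@modsub (r - a) i a) // ei aLa.
  by move=> i ir; rewrite step1 // small // ltn_pmod.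
have liftU : forall e, hasU (r - a) (r %% (r - a)) l1 l2 l3 e -> hasU r a l1 l2 l3 e.
  move=> e [c cr [hx|hy|hz]].
  - by exists c; [lia | apply: Or31; rewrite expX].
  - have m'lt : (c + r %% (r - a)) %% (r - a) < r - a by rewrite ltn_pmod.
    have [m /andP [am mr] em] := lift _ m'lt.
    by exists (m - a); [lia | apply: Or32; rewrite (expY c m)].
  - have [i /andP [ai ir] ei] := lift c cr.
    by exists i => //; apply: Or33; rewrite expZ1 // ei.
by split; apply: liftU.
Qed.
End TransL.

Section TransR.
Variables (r a : nat).
Hypotheses (v : valid r a) (r1 : 1 < r).

Lemma GoodTransR' l1 l2 l3 :
  l1 \in labels a -> l2 \in labels a -> l3 \in labels a ->
  GoodL a (negmod r a) l1 l2 l3 ->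
  GoodL r a (shiftR r a l1) (shiftR r a l2) (shiftR r a l3).
Proof.
move=> h1 h2 h3 [Gc [U1 U2 U3]].
have a0 := valid_pos v r1.
case/and3P: (v) => r0 ar co.
have hR : negmod r a + r = 0 %[mod a] by exact: negmodE.
have aRa : negmod r a < a by exact: negmod_lt.
set sl := shiftR r a.
have expX : forall c, c < a ->
    expo (Xdiv r a c) (sl l1) (sl l2) (sl l3) = expo (Xdiv a (negmod r a) c) l1 l2 l3.
  by move=> c ca; rewrite /expo /sl !(XR v r1).
have expZ : forall i, i < a ->
    expo (Zdiv r a i) (sl l1) (sl l2) (sl l3) = expo (Zdiv a (negmod r a) i) l1 l2 l3.
  by move=> i ia; rewrite /expo /sl !(ZR1 v r1).
have expY0 : forall j, a <= (j + a) %% r ->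
    expo (Ydiv r a j) (sl l1) (sl l2) (sl l3) = zexp.
  by move=> j hj; rewrite /expo !YdivE /sl !(YR0 v r1) // ltn_pmod.
have expY1 : forall c, c < a ->
    expo (Ydiv r a ((c + negmod r a) %% a + (r - a))) (sl l1) (sl l2) (sl l3)
    = expo (Ydiv a (negmod r a) c) l1 l2 l3.
  move=> c ca; set m := (c + negmod r a) %% a.
  have ma : m < a by rewrite ltn_pmod.
  rewrite /expo !YdivE (_ : (m + (r - a) + a) %% r = m); last first.
    by rewrite (_ : m + (r - a) + a = m + r) ?modnDr ?modn_small //; lia.
  by rewrite /sl !(YR1 v r1).
split.
  move=> T g H.
  have step1 : forall i, i < r -> g i = g (i %% a).
    elim/ltn_ind => i IH ir.
    case: (ltnP i a) => ia; first by rewrite modn_small.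
    have hlt_ : i - a < r by lia.
    have [_ hy _] := H _ hlt_.
    have ei : (i - a + a) %% r = i by rewrite subnK ?modn_small.
    have ha : a <= (i - a + a) %% r by rewrite ei.
    have := hy (expY0 _ ha).
    rewrite ei => ->; rewrite IH; try lia.
    by rewrite -{2}(subnK ia) modnDr.
  have small : forall c, c < a -> g c = g 0.
    apply: Gc => c ca; split => hz.
    - have hlt_ : c < r by lia.
      have [hx _ _] := H c hlt_.
      have := hx (etrans (expX c ca) hz).
      rewrite modn_small; last lia.
      move=> <-; rewrite -step1 //; lia.
    - set m := (c + negmod r a) %% a.
      have ma : m < a by rewrite ltn_pmod.
      have hlt_ : m + (r - a) < r by lia.
      have [_ hy _] := H _ hlt_.
      have := hy (etrans (expY1 c ca) hz).
      rewrite (_ : (m + (r - a) + a) %% r = m); last first.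
        by rewrite (_ : m + (r - a) + a = m + r) ?modnDr ?modn_small //; lia.
      rewrite (step1 (m + (r - a))) // => ->.
      congr g; apply: modE => //; apply: (@modD_cancel_r a).
      rewrite (_ : m + (r - a) + a = m + r); last lia.
      rewrite /m modnDml -addnA -modnDmr hR.
      by rewrite mod0n addn0 modnDr.
    - have [_ _ hzz] := H c (ltn_trans ca ar).
      have := hzz (etrans (expZ c ca) hz).
      rewrite (_ : (c + r - a) %% r = c + (r - a)); last first.
        by rewrite (_ : c + r - a = c + (r - a)) ?modn_small //; lia.
      rewrite (step1 (c + (r - a))); last lia.
      move=> <-; congr g.
      apply: (@modD_cancel_r (negmod r a + a)).
      rewrite (_ : c + a - negmod r a + (negmod r a + a) = c + a + a); last lia.
      rewrite (_ : c + (r - a) + (negmod r a + a) = c + (negmod r a + r)); last lia.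
      by rewrite -[in RHS]modnDmr hR mod0n addn0 !modnDr.
  by move=> i ir; rewrite step1 // small // ltn_pmod.
have liftU : forall e, hasU a (negmod r a) l1 l2 l3 e -> hasU r a (sl l1) (sl l2) (sl l3) e.
  move=> e [c ca [hx|hy|hz]].
  - by exists c; [lia | apply: Or31; rewrite expX].
  - exists ((c + negmod r a) %% a + (r - a)).
      by have := ltn_pmod (c + negmod r a) a0; lia.
    by apply: Or32; rewrite expY1.
  - by exists c; [lia | apply: Or33; rewrite expZ].
by split; apply: liftU.
Qed.
End TransR.
Lemma pvec0 r a : 0 < r -> pvec r a 0 = e2.
Proof.
move=> r0; have h : negmod (0 * invmod r a) r = 0 by rewrite /negmod mul0n mod0n subn0 modnn.
by rewrite /pvec h subn0 !mul0r divff // pnatr_eq0 -lt0n.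
Qed.

Lemma pvecr r a : 0 < r -> pvec r a r = e3.
Proof.
move=> r0; have h : negmod (r * invmod r a) r = 0 by rewrite /negmod modnMr subn0 modnn.
by rewrite /pvec h subnn !mul0r divff // pnatr_eq0 -lt0n.
Qed.

Lemma labels_sub r r' l : r' <= r -> l \in labels r' -> l \in labels r.
Proof. by rewrite !in_labels; case: l => // k h1 h2; apply: leq_trans h2 h1. Qed.

Lemma Lmap_ray r a l : valid r a -> 1 < r -> l \in labels (r - a) ->
  Lmap r a (rayvec (r - a) (r %% (r - a)) l) = rayvec r a l.
Proof.
move=> v r1; case: l => [m|] /=; last by rewrite Lmap_e1.
by rewrite in_labels => hm; apply: Lmap_pvec.
Qed.

Lemma Rmap_ray r a l : valid r a -> 1 < r -> l \in labels a ->
  Rmap r a (rayvec a (negmod r a) l) = rayvec r a (shiftR r a l).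
Proof.
move=> v r1; case: l => [m|] /=; last by rewrite Rmap_e1.
by rewrite in_labels => hm; apply: Rmap_pvec.
Qed.

Lemma shiftR_labels r a l : valid r a -> l \in labels a -> shiftR r a l \in labels r.
Proof.
case/and3P=> _ ar _; case: l => [m|] //=; rewrite !in_labels => hm; lia.
Qed.

Lemma cones_main n r a : valid r a -> r <= n -> forall sigma, sigma \in dfan_fuel n r a ->
  exists l1, exists l2, exists l3,
    [/\ [&& l1 \in labels r, l2 \in labels r & l3 \in labels r],
        sigma = (rayvec r a l1, rayvec r a l2, rayvec r a l3) & GoodL r a l1 l2 l3].
Proof.
elim: n r a => [|n IH] r a v rn sigma.
  by case/and3P: v; lia.
rewrite /=; case: ifP => r1.
  rewrite inE => /eqP ->.
  case/and3P: (v) => r0 ar _.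
  have er : r = 1 by lia.
  subst r; have ea : a = 0 by lia.
  subst a; exists None, (Some 0), (Some 1); split => //.
  exact: GoodBase'.
move/negbT: r1; rewrite -ltnNge => r1.
have a0 := valid_pos v r1.
case/and3P: (v) => r0 ar co.
rewrite inE => /orP [/eqP ->|].
  exists (Some 0), (Some r), (Some (r - a)); split.
  - by rewrite !in_labels leqnn leq0n leq_subr.
  - by rewrite /rayvec pvec0 // pvecr.
  - exact: GoodTop'.
rewrite mem_cat => /orP [] /mapP [c hc ->].
  have vL := validL v r1.
  have [l1 [l2 [l3 [/and3P [h1 h2 h3] ec G]]]] := IH _ _ vL (ltac:(lia)) c hc.
  exists l1, l2, l3; split.
  - by rewrite !(labels_sub (leq_subr a r)).
  - by rewrite ec /mapcone /= !Lmap_ray.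
  - exact: GoodTransL'.
have vR := validR v r1.
have [l1 [l2 [l3 [/and3P [h1 h2 h3] ec G]]]] := IH _ _ vR (ltac:(lia)) c hc.
exists (shiftR r a l1), (shiftR r a l2), (shiftR r a l3); split.
- by rewrite !shiftR_labels.
- by rewrite ec /mapcone /= !Rmap_ray.
- exact: GoodTransR'.
Qed.
Local Open Scope ring_scope.

Lemma monomialE r a l1 l2 l3 D (s : point) : (0 < r)%N ->
  l1 \in labels r -> l2 \in labels r -> l3 \in labels r ->
  monomial r a (rayvec r a l1, rayvec r a l2, rayvec r a l3) D s =
  s.1.1 ^ (D l1) * s.1.2 ^ (D l2) * s.2 ^ (D l3).
Proof. by move=> r0 h1 h2 h3; rewrite /monomial /= !coefAt_ray. Qed.

Theorem mainTheorem10 (r a : nat) (hr : (1 < r)%N) (ha0 : (0 < a)%N) (har : (a < r)%N)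
  (hco : coprime r a) (sigma : cone3) (hsigma : sigma \in danilov_cones r a)
  (s t : point) (hst : s <> t) :
  ~ qrep_iso r a (mckay_family r a sigma s) (mckay_family r a sigma t).
Proof.
have r0 : (0 < r)%N by lia.
have v : valid r a by apply/and3P.
have [l1 [l2 [l3 [/and3P [h1 h2 h3] es [Gc [U1 U2 U3]]]]]] :=
  cones_main v (leqnn r) hsigma.
subst sigma.
case=> g [gnz gs].
have mE := fun D (p : point) => monomialE a D p r0 h1 h2 h3.
have zeroE : forall D (p : point), expo D l1 l2 l3 = zexp ->
    monomial r a (rayvec r a l1, rayvec r a l2, rayvec r a l3) D p = 1.
  move=> D p [e1 e2 e3]; by rewrite mE e1 e2 e3 !expr0z !mulr1.
have gcanc : forall h i, (i < r)%N -> 1 = g h * 1 / g i -> g h = g i.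
  move=> h i ir; rewrite mulr1 => /(congr1 (fun x => x * g i)).
  by rewrite mul1r mulfVK ?gnz // => ->.
have gc : forall i, (i < r)%N -> g i = g 0%N.
  apply: Gc => i ir; have [ex ey ez] := gs i ir.
  split => hz; apply: (gcanc _ i ir).
  - by move: ex; rewrite /= !(zeroE _ _ hz).
  - by move: ey; rewrite /= !(zeroE _ _ hz).
  - by move: ez; rewrite /= !(zeroE _ _ hz).
have g0 : g 0%N != 0 by apply: gnz.
have modlt : forall k, (k %% r < r)%N by move=> k; rewrite ltn_pmod.
have agree : forall i, (i < r)%N ->
   [/\ monomial r a (rayvec r a l1, rayvec r a l2, rayvec r a l3) (Xdiv r a i) t =
       monomial r a (rayvec r a l1, rayvec r a l2, rayvec r a l3) (Xdiv r a i) s,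
       monomial r a (rayvec r a l1, rayvec r a l2, rayvec r a l3) (Ydiv r a i) t =
       monomial r a (rayvec r a l1, rayvec r a l2, rayvec r a l3) (Ydiv r a i) s &
       monomial r a (rayvec r a l1, rayvec r a l2, rayvec r a l3) (Zdiv r a i) t =
       monomial r a (rayvec r a l1, rayvec r a l2, rayvec r a l3) (Zdiv r a i) s].
  move=> i ir; have [ex ey ez] := gs i ir.
  by split; [move: ex | move: ey | move: ez]; rewrite /= !gc // mulrC mulKf.
have unitE : forall e, hasU r a l1 l2 l3 e ->
    t.1.1 ^ e.1.1 * t.1.2 ^ e.1.2 * t.2 ^ e.2 = s.1.1 ^ e.1.1 * s.1.2 ^ e.1.2 * s.2 ^ e.2.
  move=> e [i ir]; have [ax ay az] := agree i ir.
  case=> <-; rewrite /expo /=; rewrite -!mE; by [].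
have c1 := unitE _ U1; have c2 := unitE _ U2; have c3 := unitE _ U3.
move: c1 c2 c3; rewrite /= !expr1z !expr0z !mulr1 !mul1r => c1 c2 c3.
clear -hst c1 c2 c3; move: hst c1 c2 c3.
case: s => [[s1 s2] s3]; case: t => [[t1 t2] t3] /= hst e1 e2 e3.
by apply: hst; rewrite e1 e2 e3.
Qed.
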